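(* Let $L\subseteq \mathbb{K}^{2n}\oplus\mathbb{K}^{2m}$ be a nonempty affine Lagrangian relation $L:n\to m$. Then there exist $k\in\mathbb{N}$ with $k\le \min(n,m)$, an affine symplectomorphism $S$ of $(\mathbb{K}^{2n},\omega_n)$ and an affine symplectomorphism $T$ of $(\mathbb{K}^{2m},\omega_m)$ such that \[ L=\Gamma_T\circ\big(\mathrm{id}_{k}\oplus P_{m-k}\big)\circ\big(\mathrm{id}_{k}\oplus P_{n-k}^{\dagger}\big)\circ\Gamma_S, \] i.e. \[ L=\Big\{\big(v,\;T(u\oplus p)\big)\;\Big|\; v\in\mathbb{K}^{2n},\ u\in\mathbb{K}^{2k},\ p\in P_{m-k},\ \exists q\in P_{n-k}:\ S v=u\oplus q\Big\}. \] Moreover, if $L$ is a (nonempty) linear Lagrangian relation, $S$ and $T$ can be chosen to be linear symplectomorphisms.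
   Context: $\mathbb{K}$ is an arbitrary field. For $n\in\mathbb{N}$, $\mathbb{K}^{2n}=\bigoplus_{j=0}^{n-1}\mathbb{K}^2$ with coordinates $(z_j,x_j)$ carries the symplectic form $\omega_n\big(\bigoplus_j (z_j,x_j),\bigoplus_j(z'_j,x'_j)\big)=\sum_j (z_jx'_j-x_jz'_j)$. A relation $n\to m$ is a subset of $\mathbb{K}^{2n}\oplus\mathbb{K}^{2m}$, which is given the symplectic form $((v,w),(v',w'))\mapsto \omega_n(v,v')-\omega_m(w,w')$. For a linear subspace $S$ of a symplectic space $(V,\omega)$, $S^\omega=\{v: \omega(v,s)=0\ \forall s\in S\}$; $S$ is Lagrangian if $S=S^\omega$. An affine subspace (possibly empty) is Lagrangian if it is empty or its underlying linear subspace (direction) is Lagrangian; an affine (resp. linear) Lagrangian relation $n\to m$ is an affine (resp. linear) Lagrangian subspace of $\mathbb{K}^{2n}\oplus\mathbb{K}^{2m}$. Relations compose by relational composition $S\circ R=\{(a,c):\exists b,\ (a,b)\in R,(b,c)\in S\}$; $\oplus$ of relations is the direct sum (cartesian product, with coordinates concatenated), and $\mathrm{id}_k$ is the diagonal of $\mathbb{K}^{2k}$. An affine symplectomorphism is an affine bijection whose linear part preserves the symplectic form; $\Gamma_S=\{(v,Sv)\}$ denotes its graph. $P_r=\{\bigoplus_{j=0}^{r-1}(0,x_j): x_j\in\mathbb{K}\}\subseteq\mathbb{K}^{2r}$, viewed as a relation $0\to r$; for a relation $R:n\to m$, its dagger $R^\dagger:m\to n$ is $\{(\bigoplus_j(z_j,-x_j),\bigoplus_k(z'_k,-x'_k))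 : (\bigoplus_k(z'_k,x'_k),\bigoplus_j(z_j,x_j))\in R\}$, so $P_r^\dagger:r\to 0$. *)

(* Defs.v *)
From HB Require Import structures.
From mathcomp Require Import all_boot all_order all_algebra.
Set Implicit Arguments. Unset Strict Implicit. Unset Printing Implicit Defensive.
Import GRing.Theory.
Local Open Scope ring_scope.

Section SympDefs.
Variable K : fieldType.

(* K^{2n} = (+)_{j<n} K^2, coordinates (z_j, x_j) = (v j).1, (v j).2 *)
Definition vec (n : nat) := 'I_n -> K * K.

Definition vzero n : vec n := fun _ => (0, 0).
Definition vadd n (v w : vec n) : vec n := fun j => ((v j).1 + (w j).1, (v j).2 + (w j).2).
Definition vopp n (v : vec n) : vec n := fun j => (- (v j).1, - (v j).2).
Definition vscale n (a : K) (v : vec n) : vec n := fun j => (a * (v j).1, a * (v j).2).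

Definition omega n (v w : vec n) : K :=
  \sum_(j < n) ((v j).1 * (w j).2 - (v j).2 * (w j).1).

(* direct sum u (+) q : K^{2k} (+) K^{2l} -> K^{2n}, used with l = n - k, k <= n *)
Definition vcat k l n (u : vec k) (q : vec l) : vec n := fun j =>
  match (insub (nat_of_ord j) : option 'I_k) with
  | Some i => u i
  | None => match (insub (nat_of_ord j - k)%N : option 'I_l) with
            | Some i => q i
            | None => (0, 0)
            end
  end.

Definition is_linmap n m (f : vec n -> vec m) : Prop :=
  (forall v w, f (vadd v w) = vadd (f v) (f w)) /\
  (forall a v, f (vscale a v) = vscale a (f v)).

Definition affine_symplecto n (S : vec n -> vec n) : Prop :=
  bijective S /\
  exists (A : vec n -> vec n) (b : vec n),
    is_linmap A /\ (forall v, S v = vadd (A v) b) /\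
    (forall v w, omega (A v) (A w) = omega v w).

Definition linear_symplecto n (S : vec n -> vec n) : Prop :=
  bijective S /\ is_linmap S /\ (forall v w, omega (S v) (S w) = omega v w).

Definition relation n m := vec n -> vec m -> Prop.

Definition rel_form n m (v w : vec n) (v' w' : vec m) : K :=
  omega v w - omega v' w'.

Definition is_linear_subspace n m (D : relation n m) : Prop :=
  D (@vzero n) (@vzero m) /\
  (forall v w v' w', D v v' -> D w w' -> D (vadd v w) (vadd v' w')) /\
  (forall a v v', D v v' -> D (vscale a v) (vscale a v')).

Definition is_lagrangian_subspace n m (D : relation n m) : Prop :=
  is_linear_subspace D /\
  forall v v', D v v' <-> (forall w w', D w w' -> rel_form v w v' w' = 0).

Definition linear_lagrangian_relation n m (L : relation n m) : Prop :=
  is_lagrangian_subspace L.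

Definition affine_lagrangian_relation n m (L : relation n m) : Prop :=
  (forall v v', ~ L v v') \/
  exists (a : vec n) (a' : vec m) (D : relation n m),
    is_lagrangian_subspace D /\
    forall v v', L v v' <-> D (vadd v (vopp a)) (vadd v' (vopp a')).

Definition inP r (p : vec r) : Prop := forall j, (p j).1 = 0.

Definition normal_form n m (k : nat) (S : vec n -> vec n) (T : vec m -> vec m) : relation n m :=
  fun v w => exists (u : vec k) (p : vec (m - k)) (q : vec (n - k)),
    inP p /\ inP q /\ S v = @vcat k (n - k) n u q /\ w = T (@vcat k (m - k) m u p).

End SympDefs.

(* Main.v *)
Require Import Defs.
From mathcomp Require Import all_boot all_order all_algebra.
From mathcomp Require Import ring.
From Stdlib Require Import Classical FunctionalExtensionality.
Set Implicit Arguments. Unset Strict Implicit. Unset Printing Implicit Defensive.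
Import GRing.Theory.
Local Open Scope ring_scope.

Section Basics.
Variable K : fieldType.
Local Notation vec := (vec K).

Definition vget n (v : vec n) (i : nat) : K * K :=
  match (insub i : option 'I_n) with Some j => v j | None => (0, 0) end.
Definition zc n (v : vec n) i := (vget v i).1.
Definition xc n (v : vec n) i := (vget v i).2.
Definition vmk n (Z X : nat -> K) : vec n := fun j => (Z j, X j).
Arguments vmk : clear implicits.

Lemma vgetE n (v : vec n) (j : 'I_n) : vget v j = v j.
Proof. by rewrite /vget valK. Qed.

Lemma vget_out n (v : vec n) i : (n <= i)%N -> vget v i = (0, 0).
Proof. by move=> H; rewrite /vget insubN // -leqNgt. Qed.

Lemma zc_vmk n Z X i : zc (vmk n Z X) i = if (i < n)%N then Z i else 0.
Proof.
rewrite /zc /vget; case: insubP => [j Hj Hv|Hn] /=.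
  by rewrite Hj Hv.
by rewrite (negbTE Hn).
Qed.
Lemma xc_vmk n Z X i : xc (vmk n Z X) i = if (i < n)%N then X i else 0.
Proof.
rewrite /xc /vget; case: insubP => [j Hj Hv|Hn] /=.
  by rewrite Hj Hv.
by rewrite (negbTE Hn).
Qed.

Lemma zc_out n (v : vec n) i : (n <= i)%N -> zc v i = 0.
Proof. by move=> H; rewrite /zc vget_out. Qed.
Lemma xc_out n (v : vec n) i : (n <= i)%N -> xc v i = 0.
Proof. by move=> H; rewrite /xc vget_out. Qed.

Lemma vec_ext n (v w : vec n) :
  (forall i, (i < n)%N -> zc v i = zc w i) ->
  (forall i, (i < n)%N -> xc v i = xc w i) -> v = w.
Proof.
move=> Hz Hx; apply: functional_extensionality => j.
have := Hz j (ltn_ord j); have := Hx j (ltn_ord j).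
rewrite /zc /xc !vgetE; case: (v j) => a b; case: (w j) => c d /= -> -> //.
Qed.

Lemma vmk_eta n (v : vec n) : vmk n (zc v) (xc v) = v.
Proof. by apply: vec_ext => i Hi; rewrite ?zc_vmk ?xc_vmk Hi. Qed.

Lemma zc_vadd n (v w : vec n) i : zc (vadd v w) i = zc v i + zc w i.
Proof. rewrite /zc /vget; case: insubP => //= *; by rewrite addr0. Qed.
Lemma xc_vadd n (v w : vec n) i : xc (vadd v w) i = xc v i + xc w i.
Proof. rewrite /xc /vget; case: insubP => //= *; by rewrite addr0. Qed.
Lemma zc_vscale n a (v : vec n) i : zc (vscale a v) i = a * zc v i.
Proof. rewrite /zc /vget; case: insubP => //= *; by rewrite mulr0. Qed.
Lemma xc_vscale n a (v : vec n) i : xc (vscale a v) i = a * xc v i.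
Proof. rewrite /xc /vget; case: insubP => //= *; by rewrite mulr0. Qed.
Lemma zc_vopp n (v : vec n) i : zc (vopp v) i = - zc v i.
Proof. rewrite /zc /vget; case: insubP => //= *; by rewrite oppr0. Qed.
Lemma xc_vopp n (v : vec n) i : xc (vopp v) i = - xc v i.
Proof. rewrite /xc /vget; case: insubP => //= *; by rewrite oppr0. Qed.
Lemma zc_vzero n i : zc (@vzero K n) i = 0.
Proof. rewrite /zc /vget; by case: insubP. Qed.
Lemma xc_vzero n i : xc (@vzero K n) i = 0.
Proof. rewrite /xc /vget; by case: insubP. Qed.

Definition zcE := (zc_vadd, zc_vscale, zc_vopp, zc_vzero, xc_vadd, xc_vscale, xc_vopp, xc_vzero).

Definition term (a b c d : K) := a * d - b * c.

Lemma omega_nat n (v w : vec n) :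
  omega v w = \sum_(i < n) (zc v i * xc w i - xc v i * zc w i).
Proof. by apply: eq_bigr => i _; rewrite /zc /xc !vgetE. Qed.

Lemma sum_recl (G : nat -> K) n : \sum_(i < n.+1) G i = G 0%N + \sum_(i < n) G i.+1.
Proof. by rewrite big_ord_recl; congr (_ + _); apply: eq_bigr => i _; rewrite lift0. Qed.
Lemma sum_recr (G : nat -> K) n : \sum_(i < n.+1) G i = \sum_(i < n) G i + G n.
Proof. by rewrite big_ord_recr. Qed.

Lemma omega_addl n (u v w : vec n) : omega (vadd u v) w = omega u w + omega v w.
Proof.
rewrite !omega_nat -big_split; apply: eq_bigr => i _; rewrite /= !zcE; ring.
Qed.
Lemma omega_addr n (u v w : vec n) : omega w (vadd u v) = omega w u + omega w v.
Proof.
rewrite !omega_nat -big_split; apply: eq_bigr => i _; rewrite /= !zcE; ring.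
Qed.
Lemma omega_scalel n a (v w : vec n) : omega (vscale a v) w = a * omega v w.
Proof.
rewrite !omega_nat mulr_sumr; apply: eq_bigr => i _; rewrite !zcE; ring.
Qed.
Lemma omega_scaler n a (v w : vec n) : omega w (vscale a v) = a * omega w v.
Proof.
rewrite !omega_nat mulr_sumr; apply: eq_bigr => i _; rewrite !zcE; ring.
Qed.
Lemma omega_oppl n (v w : vec n) : omega (vopp v) w = - omega v w.
Proof.
rewrite !omega_nat -sumrN; apply: eq_bigr => i _; rewrite !zcE; ring.
Qed.
Lemma omega_oppr n (v w : vec n) : omega w (vopp v) = - omega w v.
Proof.
rewrite !omega_nat -sumrN; apply: eq_bigr => i _; rewrite !zcE; ring.
Qed.
Lemma omega_anti n (v w : vec n) : omega v w = - omega w v.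
Proof.
rewrite !omega_nat -sumrN; apply: eq_bigr => i _; ring.
Qed.
Lemma omega_vv n (v : vec n) : omega v v = 0.
Proof.
rewrite !omega_nat big1 // => i _; ring.
Qed.
Lemma omega_0l n (v : vec n) : omega (@vzero K n) v = 0.
Proof. rewrite !omega_nat big1 // => i _; rewrite !zcE; ring. Qed.
Lemma omega_0r n (v : vec n) : omega v (@vzero K n) = 0.
Proof. rewrite !omega_nat big1 // => i _; rewrite !zcE; ring. Qed.
Lemma omega_n0 (v w : vec 0) : omega v w = 0.
Proof. by rewrite /omega big_ord0. Qed.

Definition ee n j : vec n := vmk n (fun i => (i == j)%:R) (fun _ => 0).
Definition ff n j : vec n := vmk n (fun _ => 0) (fun i => (i == j)%:R).
Arguments ee : clear implicits.
Arguments ff : clear implicits.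

Lemma sum_delta n (G : nat -> K) j : (j < n)%N ->
  \sum_(i < n) (G i * (val i == j)%:R) = G j.
Proof.
move=> Hj; rewrite (bigD1 (Ordinal Hj)) //= eqxx mulr1 big1 ?addr0 // => i Hi.
have -> : (val i == j) = false.
  by apply/negP => /eqP E; move: Hi; rewrite -val_eqE /= E eqxx.
by rewrite mulr0.
Qed.

Lemma omega_ff n (v : vec n) j : (j < n)%N -> omega v (ff n j) = zc v j.
Proof.
move=> Hj; rewrite omega_nat -(sum_delta (zc v) Hj); apply: eq_bigr => i _.
by rewrite zc_vmk xc_vmk ltn_ord; ring.
Qed.
Lemma omega_ee n (v : vec n) j : (j < n)%N -> omega v (ee n j) = - xc v j.
Proof.
move=> Hj; rewrite omega_nat -(sum_delta (fun i => - xc v i) Hj).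
apply: eq_bigr => i _; rewrite zc_vmk xc_vmk ltn_ord; ring.
Qed.

End Basics.
Arguments vmk {K} n Z X. Arguments ee {K} n j. Arguments ff {K} n j.
From mathcomp Require Import all_boot all_order all_algebra.
From mathcomp Require Import ring.
From Stdlib Require Import Classical FunctionalExtensionality.
Set Implicit Arguments. Unset Strict Implicit. Unset Printing Implicit Defensive.
Import GRing.Theory.
Local Open Scope ring_scope.

Section Symp.
Variable K : fieldType.
Local Notation vec := (vec K).
Local Notation vz := (@vzero K _).

Lemma vscale0 n (v : vec n) : vscale 0 v = vz.
Proof. apply: vec_ext => i _; rewrite !zcE; ring. Qed.

Lemma lin0 n m (f : vec n -> vec m) : is_linmap f -> f vz = vz.
Proof. by case=> _ Hs; rewrite -(vscale0 vz) Hs vscale0. Qed.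

Lemma linsymp_id n : linear_symplecto (fun v : vec n => v).
Proof. by split; [exists id|split]. Qed.

Lemma linsymp_comp n (S T : vec n -> vec n) :
  linear_symplecto S -> linear_symplecto T -> linear_symplecto (fun v => T (S v)).
Proof.
case=> HbS [[HaS HsS] HoS] [HbT [[HaT HsT] HoT]]; split.
  exact: bij_comp HbT HbS.
split; first split.
- by move=> v w; rewrite HaS HaT.
- by move=> a v; rewrite HsS HsT.
by move=> v w; rewrite HoT HoS.
Qed.

Lemma linsymp_inv n (S Si : vec n -> vec n) :
  linear_symplecto S -> cancel S Si -> cancel Si S -> linear_symplecto Si.
Proof.
case=> _ [[Ha Hs] Ho] c1 c2; split; first by exists S.
split; first split.
- by move=> v w; apply: (can_inj c1); rewrite Ha !c2.
- by move=> a v; apply: (can_inj c1); rewrite Hs !c2.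
by move=> v w; rewrite -Ho !c2.
Qed.

Lemma linsymp_invE n (S : vec n -> vec n) : linear_symplecto S ->
  exists Si, linear_symplecto Si /\ cancel S Si /\ cancel Si S.
Proof.
move=> H; have [[g c1 c2] _] := H; exists g; split => //.
exact: linsymp_inv H c1 c2.
Qed.

Definition vsub n (x y : vec n) := vadd x (vopp y).

Definition tv n (u : vec n) (c : K) (x : vec n) := vadd x (vscale (c * omega u x) u).

Lemma omega_tv n (u : vec n) c x : omega u (tv u c x) = omega u x.
Proof. by rewrite /tv omega_addr omega_scaler omega_vv mulr0 addr0. Qed.

Lemma tv_linsymp n (u : vec n) c : linear_symplecto (tv u c).
Proof.
split.
  exists (tv u (- c)) => x; apply: vec_ext => i _;
    rewrite /tv !zcE omega_addr omega_scaler omega_vv; ring.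
split; first split.
- move=> v w; apply: vec_ext => i _; rewrite /tv !zcE omega_addr; ring.
- move=> a v; apply: vec_ext => i _; rewrite /tv !zcE omega_scaler; ring.
move=> v w; rewrite /tv !omega_addl !omega_addr !omega_scalel !omega_scaler omega_vv.
rewrite (omega_anti v u); ring.
Qed.

Lemma tv_fix n (u : vec n) c w : omega u w = 0 -> tv u c w = w.
Proof. move=> H; apply: vec_ext => i _; rewrite /tv !zcE H; ring. Qed.

Lemma tv_move n (x y : vec n) : omega y x != 0 -> tv (vsub y x) (omega y x)^-1 x = y.
Proof.
move=> H; have E : omega (vsub y x) x = omega y x.
  by rewrite /vsub omega_addl omega_oppl omega_vv oppr0 addr0.
apply: vec_ext => i _; rewrite /tv E mulVf // !zcE; ring.
Qed.

Lemma nonzero_wit n (x : vec n) : x <> vz -> exists a, omega x a != 0.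
Proof.
move=> Hx; apply: NNPP => Hn; apply: Hx.
have H0 : forall a, omega x a = 0.
  by move=> a; apply/eqP; apply: negbNE; apply/negP => Ha; apply: Hn; exists a.
apply: vec_ext => i Hi; rewrite zcE.
  by rewrite -omega_ff // H0.
by rewrite -[xc x i]opprK -omega_ee // H0 oppr0.
Qed.

Lemma omega_ne0_sym n (x y : vec n) : omega x y != 0 -> omega y x != 0.
Proof. by rewrite (omega_anti y) oppr_eq0. Qed.

Lemma nz_of_omega n (x y : vec n) : omega x y != 0 -> x <> vz.
Proof. by move=> H E; move: H; rewrite E omega_0l eqxx. Qed.

Lemma symp_trans n (x y : vec n) : x <> vz -> y <> vz ->
  exists S, linear_symplecto S /\ S x = y.
Proof.
move=> Hx Hy.
have step : forall x y : vec n, omega y x != 0 ->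
    exists S, linear_symplecto S /\ S x = y.
  by move=> x' y' H; exists (tv (vsub y' x') (omega y' x')^-1); split;
    [exact: tv_linsymp | exact: tv_move].
case: (boolP (omega y x == 0)) => Hyx; last exact: step.
have [a Ha] := nonzero_wit Hx; have [b Hb] := nonzero_wit Hy.
have [z [Hzx Hyz]] : exists z, omega z x != 0 /\ omega y z != 0.
  case: (boolP (omega y a == 0)) => Hya; last first.
    by exists a; split => //; exact: omega_ne0_sym.
  case: (boolP (omega b x == 0)) => Hbx; last first.
    by exists b; split => //.
  exists (vadd a b); rewrite omega_addl omega_addr (eqP Hbx) (eqP Hya) addr0 add0r.
  by split => //; exact: omega_ne0_sym.
have [S1 [H1 E1]] := step _ _ Hzx; have [S2 [H2 E2]] := step _ _ Hyz.
exists (fun v => S2 (S1 v)); split; first exact: linsymp_comp.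
by rewrite E1 E2.
Qed.

Lemma tv_move_fix n (y y' e : vec n) : omega y' y != 0 -> omega y e = omega y' e ->
  tv (vsub y' y) (omega y' y)^-1 e = e.
Proof.
move=> _ H; apply: tv_fix; rewrite /vsub omega_addl omega_oppl H; ring.
Qed.

Lemma omega_ee_ff n : omega (ee (K:=K) n.+1 0) (ff (K:=K) n.+1 0) = 1.
Proof. by rewrite omega_ff // zc_vmk. Qed.
Lemma omega_ff_ee n : omega (ff (K:=K) n.+1 0) (ee (K:=K) n.+1 0) = -1.
Proof. by rewrite omega_ee // xc_vmk. Qed.

Lemma symp_pair n (v v' : vec n.+1) : omega v v' = 1 ->
  exists S, linear_symplecto S /\ S v = ee (K:=K) n.+1 0 /\ S v' = ff (K:=K) n.+1 0.
Proof.
move=> Hvv.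
set e := ee (K:=K) n.+1 0; set f := ff (K:=K) n.+1 0.
have Hef := omega_ee_ff n; have Hfe := omega_ff_ee n.
have Hv : v <> vz by apply: (@nz_of_omega _ v v'); rewrite Hvv oner_eq0.
have He : e <> vz by apply: (@nz_of_omega _ e f); rewrite Hef oner_eq0.
have [S1 [HS1 E1]] := symp_trans Hv He.
set y := S1 v'.
have Hey : omega e y = 1 by rewrite -E1 /y; case: HS1 => _ [_ ->].
have Hye : omega y e = -1 by rewrite omega_anti Hey.
pose ok (S : vec n.+1 -> vec n.+1) := linear_symplecto S /\ S e = e /\ S y = f.
suff [S [HS [Se Sy]]] : exists S, ok S.
  exists (fun x => S (S1 x)); split; first exact: linsymp_comp.
  by rewrite E1 Se.
case: (boolP (omega f y == 0)) => Hfy; last first.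
  exists (tv (vsub f y) (omega f y)^-1); split; first exact: tv_linsymp.
  split; last exact: tv_move.
  by apply: tv_move_fix => //; rewrite Hye Hfe.
set z := vadd e f.
have Hzy : omega z y != 0.
  by rewrite omega_addl Hey (eqP Hfy) addr0 oner_eq0.
have Hze : omega z e = -1 by rewrite omega_addl omega_vv Hfe add0r.
have Hfz : omega f z != 0.
  by rewrite omega_addr Hfe omega_vv addr0 oppr_eq0 oner_eq0.
exists (fun x => tv (vsub f z) (omega f z)^-1 (tv (vsub z y) (omega z y)^-1 x)).
split; first exact: linsymp_comp (tv_linsymp _ _) (tv_linsymp _ _).
split.
  rewrite (@tv_move_fix _ y z e) //; last by rewrite Hye Hze.
  by rewrite (@tv_move_fix _ z f e) //; rewrite Hze Hfe.
by rewrite tv_move // tv_move.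
Qed.

End Symp.
From mathcomp Require Import all_boot all_order all_algebra.
From mathcomp Require Import ring.
From Stdlib Require Import Classical FunctionalExtensionality.
Set Implicit Arguments. Unset Strict Implicit. Unset Printing Implicit Defensive.
Import GRing.Theory.
Local Open Scope ring_scope.

Section Lag.
Variable K : fieldType.
Local Notation vec := (vec K).
Local Notation vz := (@vzero K _).

Definition NFex n m (D : relation K n m) := exists k (S : vec n -> vec n) (T : vec m -> vec m),
  (k <= minn n m)%N /\ linear_symplecto S /\ linear_symplecto T /\
  forall v w, D v w <-> normal_form k S T v w.

Lemma lag_orth n m (D : relation K n m) x y a b :
  is_lagrangian_subspace D -> D x y -> D a b -> omega x a = omega y b.
Proof.
case=> _ H Dxy Dab; apply/eqP; rewrite -subr_eq0; apply/eqP.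
by move: (proj1 (H x y) Dxy a b Dab).
Qed.

Lemma lag_not_in n m (D : relation K n m) x y :
  is_lagrangian_subspace D -> ~ D x y -> exists a b, D a b /\ omega x a != omega y b.
Proof.
case=> _ H N; apply: NNPP => C; apply: N; apply/H => a b Dab.
apply/eqP; rewrite subr_eq0; apply: negbNE; apply/negP => E; apply: C.
by exists a, b.
Qed.

Lemma lag_in n m (D : relation K n m) x y :
  is_lagrangian_subspace D -> (forall a b, D a b -> omega x a = omega y b) -> D x y.
Proof.
case=> _ H Ho; apply/H => a b Dab; by rewrite /rel_form (Ho a b Dab) subrr.
Qed.

Lemma lag_transport n m (D : relation K n m) S Si T Ti :
  linear_symplecto S -> linear_symplecto T -> cancel S Si -> cancel Si S ->
  cancel T Ti -> cancel Ti T -> is_lagrangian_subspace D ->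
  is_lagrangian_subspace (fun x y => D (Si x) (Ti y)).
Proof.
move=> HS HT c1 c2 d1 d2 HD.
have HSi := linsymp_inv HS c1 c2; have HTi := linsymp_inv HT d1 d2.
case: (HSi) => _ [[Sa Ss] So]; case: (HTi) => _ [[Ta Ts] To].
case: (HD) => [[H0 [Ha Hs]] HL].
split; first split.
  by rewrite (lin0 (conj Sa Ss)) (lin0 (conj Ta Ts)).
  split; first by move=> v w v' w' D1 D2; rewrite Sa Ta; apply: Ha.
  by move=> a v v' D1; rewrite Ss Ts; apply: Hs.
move=> x y; split.
  move=> Dxy a b Dab; rewrite /rel_form -So -To.
  by rewrite (lag_orth HD Dxy Dab) subrr.
move=> H; apply: lag_in => // a b Dab.
have := H (S a) (T b); rewrite c1 d1 => /(_ Dab) /eqP; rewrite subr_eq0 => /eqP.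
case: HS => _ [_ HSo]; case: HT => _ [_ HTo].
by move=> E; rewrite -[omega (Si x) a]HSo -[omega (Ti y) b]HTo c2 d2.
Qed.

Lemma nf_transport n m (D : relation K n m) S Si T Ti k S' T' :
  cancel S Si -> cancel T Ti -> cancel Ti T ->
  (forall x y, D (Si x) (Ti y) <-> normal_form k S' T' x y) ->
  forall v w, D v w <-> normal_form k (fun v => S' (S v)) (fun u => Ti (T' u)) v w.
Proof.
move=> c1 d1 d2 H v w; rewrite -{1}(c1 v) -{1}(d1 w) H.
split; case=> u [p [q [Hp [Hq [E1 E2]]]]]; exists u, p, q; do !split => //.
  by rewrite -E2 d1.
by rewrite E2 d2.
Qed.

Lemma lag_transpose n m (D : relation K n m) :
  is_lagrangian_subspace D -> is_lagrangian_subspace (fun w v => D v w).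
Proof.
case=> [[H0 [Ha Hs]] HL]; split; first split => //.
  by split => *; [apply: Ha | apply: Hs].
move=> x y; split.
  move=> Dyx a b Dba; rewrite /rel_form.
  by rewrite (lag_orth (conj (conj H0 (conj Ha Hs)) HL) Dyx Dba) subrr.
move=> H; apply/HL => a b Dab; have := H b a Dab.
by rewrite /rel_form => /eqP; rewrite subr_eq0 eq_sym -subr_eq0 => /eqP.
Qed.

Lemma nf_transpose n m (D : relation K n m) :
  NFex (fun w v => D v w) -> NFex D.
Proof.
case=> k [S [T [Hk [HS [HT H]]]]].
have [Si [HSi [c1 c2]]] := linsymp_invE HS.
have [Ti [HTi [d1 d2]]] := linsymp_invE HT.
exists k, Ti, Si; split; first by rewrite minnC.
split => //; split => // v w; rewrite (H w v).
split; case=> u [p [q [Hp [Hq [E1 E2]]]]]; exists u, q, p; do !split => //.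
- by rewrite E2 d1.
- by rewrite -E1 c1.
- by rewrite E2 c2.
- by rewrite -E1 d2.
Qed.

End Lag.
From mathcomp Require Import all_boot all_order all_algebra.
From mathcomp Require Import ring zify.
From Stdlib Require Import Classical FunctionalExtensionality.
Set Implicit Arguments. Unset Strict Implicit. Unset Printing Implicit Defensive.
Import GRing.Theory.
Local Open Scope ring_scope.

Section Cat.
Variable K : fieldType.
Local Notation vec := (vec K).
Local Notation vz := (@vzero K _).

Lemma vget_vcat k l n (u : vec k) (q : vec l) i : (i < n)%N ->
  vget (@vcat K k l n u q) i = if (i < k)%N then vget u i else vget q (i - k).
Proof.
move=> Hi; rewrite {1}/vget; case: insubP => [j _ Hv|]; last by rewrite Hi.
rewrite /vcat Hv; case: (ltnP i k) => Hik.
  by rewrite /vget; case: insubP => [a _ _ //|]; rewrite Hik.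
by rewrite insubN // -leqNgt.
Qed.

Lemma zc_vcat k l n (u : vec k) (q : vec l) i : (i < n)%N ->
  zc (@vcat K k l n u q) i = if (i < k)%N then zc u i else zc q (i - k).
Proof. by move=> Hi; rewrite /zc vget_vcat //; case: ifP. Qed.
Lemma xc_vcat k l n (u : vec k) (q : vec l) i : (i < n)%N ->
  xc (@vcat K k l n u q) i = if (i < k)%N then xc u i else xc q (i - k).
Proof. by move=> Hi; rewrite /xc vget_vcat //; case: ifP. Qed.

Lemma inP_zc r (q : vec r) : inP q <-> forall i, zc q i = 0.
Proof.
split.
  move=> H i; case: (ltnP i r) => Hi; last exact: zc_out.
  by rewrite /zc -[i]/(val (Ordinal Hi)) vgetE H.
by move=> H j; rewrite -(H j) /zc vgetE.
Qed.

End Cat.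
From mathcomp Require Import all_boot all_order all_algebra.
From mathcomp Require Import ring zify.
From Stdlib Require Import Classical FunctionalExtensionality.
Set Implicit Arguments. Unset Strict Implicit. Unset Printing Implicit Defensive.
Import GRing.Theory.
Local Open Scope ring_scope.

Section Snoc.
Variable K : fieldType.
Local Notation vec := (vec K).
Local Notation vz := (@vzero K _).

Definition vres n N (x : vec N) : vec n := vmk n (zc x) (xc x).
Arguments vres : clear implicits.
Arguments vres n {N} x.

Lemma zc_vres n N (x : vec N) i : zc (vres n x) i = if (i < n)%N then zc x i else 0.
Proof. exact: zc_vmk. Qed.
Lemma xc_vres n N (x : vec N) i : xc (vres n x) i = if (i < n)%N then xc x i else 0.
Proof. exact: xc_vmk. Qed.

Lemma vres_add n N (x y : vec N) : vres n (vadd x y) = vadd (vres n x) (vres n y).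
Proof. by apply: vec_ext => i Hi; rewrite !zcE ?zc_vres ?xc_vres Hi !zcE. Qed.
Lemma vres_scale n N a (x : vec N) : vres n (vscale a x) = vscale a (vres n x).
Proof. by apply: vec_ext => i Hi; rewrite !zcE ?zc_vres ?xc_vres Hi !zcE. Qed.
Lemma vres_0 n N : vres n (@vzero K N) = vz.
Proof. by apply: vec_ext => i Hi; rewrite !zcE ?zc_vres ?xc_vres Hi !zcE. Qed.
Lemma vres_up n (x : vec n) : vres n (vres n.+1 x) = x.
Proof.
apply: vec_ext => i Hi; rewrite ?zc_vres ?xc_vres Hi ltnS ltnW //.
Qed.

Lemma omega_snoc n (x y : vec n.+1) :
  omega x y = omega (vres n x) (vres n y) + (zc x n * xc y n - xc x n * zc y n).
Proof.
rewrite !omega_nat (sum_recr (fun i => zc x i * xc y i - xc x i * zc y i)).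
congr (_ + _); apply: eq_bigr => i _; by rewrite !zc_vres !xc_vres ltn_ord.
Qed.

Lemma vec_ext_snoc n (y z : vec n.+1) : vres n y = vres n z ->
  zc y n = zc z n -> xc y n = xc z n -> y = z.
Proof.
move=> E Ez Ex; apply: vec_ext => i Hi; case: (ltnP i n) => Hin.
- by have := f_equal (fun v => zc v i) E; rewrite !zc_vres Hin.
- by have -> : i = n by lia.
- by have := f_equal (fun v => xc v i) E; rewrite !xc_vres Hin.
- by have -> : i = n by lia.
Qed.

Lemma omega_vres_up n (x a : vec n) : omega (vres n.+1 x) (vres n.+1 a) = omega x a.
Proof.
rewrite omega_snoc !vres_up !zc_vres !xc_vres ltnSn !zc_out // !xc_out //; ring.
Qed.

Lemma vadd_scale0 n a (y : vec n) : vadd y (vscale a vz) = y.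
Proof. by apply: vec_ext => i _; rewrite !zcE; ring. Qed.

Lemma snoc_decomp n (x : vec n.+1) : zc x n = 0 ->
  x = vadd (vres n.+1 (vres n x)) (vscale (xc x n) (ff n.+1 n)).
Proof.
move=> H; apply: vec_ext_snoc.
- apply: vec_ext => i Hi; rewrite ?zc_vres ?xc_vres Hi !zcE ?zc_vres ?xc_vres /ff ?zc_vmk ?xc_vmk.
    by rewrite ltnS ltnW // Hi; ring.
  by rewrite ltnS ltnW // Hi (ltn_eqF Hi) /=; ring.
- by rewrite !zcE !zc_vres ltnSn ltnn /ff zc_vmk ltnSn H; ring.
- by rewrite !zcE !xc_vres ltnSn ltnn /ff xc_vmk ltnSn eqxx /=; ring.
Qed.

Lemma split_snoc n m (D1 : relation K n.+1 m) :
  is_lagrangian_subspace D1 -> D1 (ff n.+1 n) vz ->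
  (forall (x : vec n.+1) y, D1 x y <-> zc x n = 0 /\ D1 (vres n.+1 (vres n x)) y) /\
  is_lagrangian_subspace (fun (x'' : vec n) y => D1 (vres n.+1 x'') y).
Proof.
move=> HL Hf; have [[H0 [Ha Hs]] HLi] := HL.
have Hz : forall x y, D1 x y -> zc x n = 0.
  move=> x y Dxy; have := lag_orth HL Dxy Hf.
  by rewrite omega_ff // omega_0r.
have Hsplit : forall (x : vec n.+1) y, D1 x y <-> zc x n = 0 /\ D1 (vres n.+1 (vres n x)) y.
  move=> x y; split.
    move=> Dxy; have Hx := Hz _ _ Dxy; split => //.
    have := Ha _ _ _ _ Dxy (Hs (- xc x n) _ _ Hf).
    rewrite vadd_scale0.
    have -> : vadd x (vscale (- xc x n) (ff n.+1 n)) = vres n.+1 (vres n x) => //.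
    rewrite {1}(snoc_decomp Hx).
    by apply: vec_ext => i _; rewrite !zcE; ring.
  case=> Hx D'; rewrite (snoc_decomp Hx) -(vadd_scale0 (xc x n) y).
  exact: Ha _ _ _ _ D' (Hs _ _ _ Hf).
split => //.
split; first split.
- by rewrite vres_0.
- split; first by move=> v w v' w' D1' D2'; rewrite vres_add; apply: Ha.
  by move=> a v v' D'; rewrite vres_scale; apply: Hs.
move=> x y; split.
  move=> Dxy a b Dab; rewrite /rel_form -omega_vres_up.
  by rewrite (lag_orth HL Dxy Dab) subrr.
move=> H; apply: lag_in => // a b Dab.
have [Han D'] := (proj1 (Hsplit a b) Dab).
have := H (vres n a) b D' => /eqP; rewrite subr_eq0 => /eqP <-.
rewrite {1}(snoc_decomp Han) omega_addr omega_scaler omega_ff //.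
by rewrite zc_vres ltnSn zc_out // mulr0 addr0 omega_vres_up.
Qed.

Definition Sext n (S : vec n -> vec n) (x : vec n.+1) : vec n.+1 :=
  vmk n.+1 (fun i => if (i < n)%N then zc (S (vres n x)) i else zc x i)
           (fun i => if (i < n)%N then xc (S (vres n x)) i else xc x i).

Lemma vres_Sext n S (x : vec n.+1) : vres n (Sext S x) = S (vres n x).
Proof.
apply: vec_ext => i Hi; rewrite ?zc_vres ?xc_vres Hi /Sext ?zc_vmk ?xc_vmk (leqW Hi) Hi //.
Qed.
Lemma zc_Sext n S (x : vec n.+1) : zc (Sext S x) n = zc x n.
Proof. by rewrite zc_vmk ltnSn ltnn. Qed.
Lemma xc_Sext n S (x : vec n.+1) : xc (Sext S x) n = xc x n.
Proof. by rewrite xc_vmk ltnSn ltnn. Qed.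

Lemma Sext_linsymp n (S : vec n -> vec n) : linear_symplecto S -> linear_symplecto (Sext S).
Proof.
move=> HS; have [Si [HSi [c1 c2]]] := linsymp_invE HS.
case: HS => _ [[Ha Hs] Ho].
split.
  exists (Sext Si) => x; apply: vec_ext_snoc; rewrite ?vres_Sext ?zc_Sext ?xc_Sext //.
split; first split.
- move=> v w; apply: vec_ext_snoc.
  + by rewrite vres_add !vres_Sext vres_add Ha.
  + by rewrite zc_vadd !zc_Sext zc_vadd.
  + by rewrite xc_vadd !xc_Sext xc_vadd.
- move=> a v; apply: vec_ext_snoc.
  + by rewrite vres_scale !vres_Sext vres_scale Hs.
  + by rewrite zc_vscale !zc_Sext zc_vscale.
  + by rewrite xc_vscale !xc_Sext xc_vscale.
move=> v w; rewrite omega_snoc !vres_Sext Ho !zc_Sext !xc_Sext -omega_snoc //.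
Qed.

Lemma zc_vres_lt n N (x : vec N) i : (i < n)%N -> zc x i = zc (vres n x) i.
Proof. by move=> H; rewrite zc_vres H. Qed.
Lemma xc_vres_lt n N (x : vec N) i : (i < n)%N -> xc x i = xc (vres n x) i.
Proof. by move=> H; rewrite xc_vres H. Qed.

Lemma nf_snoc n m k (S : vec n -> vec n) (T : vec m -> vec m) (x : vec n.+1) w :
  (k <= n)%N ->
  ((zc x n = 0 /\ normal_form k S T (vres n x) w) <-> normal_form k (Sext S) T x w).
Proof.
move=> Hk; split.
  case=> Hx [u [p [q [Hp [Hq [E1 E2]]]]]].
  rewrite inP_zc in Hq.
  exists u, p, (vmk (n.+1 - k) (fun i => zc (Sext S x) (i + k)) (fun i => xc (Sext S x) (i + k))).
  split => //; split.
    apply/inP_zc => i; rewrite zc_vmk; case: ifP => // Hi.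
    case: (ltnP (i + k) n) => Hik.
      rewrite (zc_vres_lt _ Hik) vres_Sext E1 zc_vcat // ifF; last by apply/negP; lia.
      by rewrite addnK Hq.
    have E : (i + k = n)%N by lia.
    by rewrite E zc_Sext Hx.
  split => //.
  apply: vec_ext => i Hi; rewrite ?zc_vcat ?xc_vcat //; case: ifP => Hik.
  - by rewrite (zc_vres_lt _ (leq_trans Hik Hk)) vres_Sext E1 zc_vcat ?Hik //; lia.
  - by rewrite zc_vmk ifT ?subnK //; lia.
  - by rewrite (xc_vres_lt _ (leq_trans Hik Hk)) vres_Sext E1 xc_vcat ?Hik //; lia.
  - by rewrite xc_vmk ifT ?subnK //; lia.
case=> u [p [q [Hp [Hq [E1 E2]]]]]; rewrite inP_zc in Hq.
split.
  by rewrite -(zc_Sext S) E1 zc_vcat // ifF ?Hq //; apply/negP; lia.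
exists u, p, (vmk (n - k) (zc q) (xc q)); split => //; split.
  by apply/inP_zc => i; rewrite zc_vmk Hq; case: ifP.
split => //.
rewrite -vres_Sext E1; apply: vec_ext => i Hi.
  rewrite zc_vres Hi !zc_vcat //; last lia.
  by case: ifP => // Hik; rewrite zc_vmk ifT //; lia.
rewrite xc_vres Hi !xc_vcat //; last lia.
by case: ifP => // Hik; rewrite xc_vmk ifT //; lia.
Qed.

End Snoc.
Arguments vres {K} n {N} x.
From mathcomp Require Import all_boot all_order all_algebra.
From mathcomp Require Import ring zify.
From Stdlib Require Import Classical FunctionalExtensionality.
Set Implicit Arguments. Unset Strict Implicit. Unset Printing Implicit Defensive.
Import GRing.Theory.
Local Open Scope ring_scope.

Section Cons.
Variable K : fieldType.
Local Notation vec := (vec K).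
Local Notation vz := (@vzero K _).

Definition vtl n (x : vec n.+1) : vec n := vmk n (fun i => zc x i.+1) (fun i => xc x i.+1).
Definition vsh n (x : vec n) : vec n.+1 :=
  vmk n.+1 (fun i => if i is i'.+1 then zc x i' else 0) (fun i => if i is i'.+1 then xc x i' else 0).

Lemma zc_vtl n (x : vec n.+1) i : zc (vtl x) i = zc x i.+1.
Proof. by rewrite zc_vmk; case: ifP => // /negbT; rewrite -leqNgt => H; rewrite zc_out. Qed.
Lemma xc_vtl n (x : vec n.+1) i : xc (vtl x) i = xc x i.+1.
Proof. by rewrite xc_vmk; case: ifP => // /negbT; rewrite -leqNgt => H; rewrite xc_out. Qed.
Lemma zc_vsh n (x : vec n) i : zc (vsh x) i = if i is i'.+1 then zc x i' else 0.
Proof.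
rewrite zc_vmk; case: ifP => //; case: i => // i /negbT; rewrite -leqNgt ltnS => H.
by rewrite zc_out.
Qed.
Lemma xc_vsh n (x : vec n) i : xc (vsh x) i = if i is i'.+1 then xc x i' else 0.
Proof.
rewrite xc_vmk; case: ifP => //; case: i => // i /negbT; rewrite -leqNgt ltnS => H.
by rewrite xc_out.
Qed.

Definition cE := (zc_vtl, xc_vtl, zc_vsh, xc_vsh, zc_vadd, zc_vscale, zc_vopp, zc_vzero,
  xc_vadd, xc_vscale, xc_vopp, xc_vzero).

Lemma vtl_vsh n (x : vec n) : vtl (vsh x) = x.
Proof. by apply: vec_ext => i _; rewrite !cE. Qed.
Lemma vsh_add n (x y : vec n) : vsh (vadd x y) = vadd (vsh x) (vsh y).
Proof. by apply: vec_ext => [] [|i] _; rewrite !cE // addr0. Qed.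
Lemma vsh_scale n a (x : vec n) : vsh (vscale a x) = vscale a (vsh x).
Proof. by apply: vec_ext => [] [|i] _; rewrite !cE // mulr0. Qed.
Lemma vsh_0 n : vsh (@vzero K n) = vz.
Proof. by apply: vec_ext => [] [|i] _; rewrite !cE. Qed.
Lemma vtl_add n (x y : vec n.+1) : vtl (vadd x y) = vadd (vtl x) (vtl y).
Proof. by apply: vec_ext => i _; rewrite !cE. Qed.
Lemma vtl_scale n a (x : vec n.+1) : vtl (vscale a x) = vscale a (vtl x).
Proof. by apply: vec_ext => i _; rewrite !cE. Qed.

Lemma omega_cons n (x y : vec n.+1) :
  omega x y = (zc x 0 * xc y 0 - xc x 0 * zc y 0) + omega (vtl x) (vtl y).
Proof.
rewrite !omega_nat (sum_recl (fun i => zc x i * xc y i - xc x i * zc y i)).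
congr (_ + _); apply: eq_bigr => i _; by rewrite !cE.
Qed.

Lemma vec_ext_cons n (y z : vec n.+1) : vtl y = vtl z ->
  zc y 0 = zc z 0 -> xc y 0 = xc z 0 -> y = z.
Proof.
move=> E Ez Ex; apply: vec_ext => [] [|i] Hi //.
- by have := f_equal (fun v => zc v i) E; rewrite !cE.
- by have := f_equal (fun v => xc v i) E; rewrite !cE.
Qed.

Lemma omega_vsh n (x a : vec n) : omega (vsh x) (vsh a) = omega x a.
Proof. by rewrite omega_cons !vtl_vsh !cE; ring. Qed.

Definition ccomb n (a b : K) : vec n.+1 := vadd (vscale a (ee n.+1 0)) (vscale b (ff n.+1 0)).

Lemma cons_decomp n (x : vec n.+1) : x = vadd (vsh (vtl x)) (ccomb (zc x 0) (xc x 0)).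
Proof.
apply: vec_ext => [] [|i] Hi; rewrite !cE /ee /ff ?zc_vmk ?xc_vmk Hi /=; ring.
Qed.
Lemma cons_decomp' n (x : vec n.+1) : vsh (vtl x) = vadd x (ccomb (- zc x 0) (- xc x 0)).
Proof.
apply: vec_ext => [] [|i] Hi; rewrite !cE /ee /ff ?zc_vmk ?xc_vmk Hi /=; ring.
Qed.

Lemma omega_vsh_ccomb n (x : vec n) a b : omega (vsh x) (ccomb a b) = 0.
Proof.
rewrite /ccomb omega_addr !omega_scaler omega_ee // omega_ff // !cE /=; ring.
Qed.

Lemma split_cons n m (D1 : relation K n.+1 m.+1) :
  is_lagrangian_subspace D1 -> D1 (ee n.+1 0) (ee m.+1 0) -> D1 (ff n.+1 0) (ff m.+1 0) ->
  (forall (x : vec n.+1) (y : vec m.+1), D1 x y <->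
     zc x 0 = zc y 0 /\ xc x 0 = xc y 0 /\ D1 (vsh (vtl x)) (vsh (vtl y))) /\
  is_lagrangian_subspace (fun (x : vec n) (y : vec m) => D1 (vsh x) (vsh y)).
Proof.
move=> HL He Hf; have [[H0 [Ha Hs]] HLi] := HL.
have Hc : forall x y a b, D1 x y -> D1 (vadd x (ccomb a b)) (vadd y (ccomb a b)).
  move=> x y a b Dxy; apply: (Ha) => //; apply: (Ha); exact: (Hs).
have Hsplit : forall (x : vec n.+1) (y : vec m.+1), D1 x y <->
     zc x 0 = zc y 0 /\ xc x 0 = xc y 0 /\ D1 (vsh (vtl x)) (vsh (vtl y)).
  move=> x y; split.
    move=> Dxy.
    have := lag_orth HL Dxy He; rewrite !omega_ee // => /eqP; rewrite eqr_opp => /eqP Ex.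
    have := lag_orth HL Dxy Hf; rewrite !omega_ff // => Ez.
    split => //; split => //.
    by rewrite !cons_decomp' Ez Ex; apply: Hc.
  case=> Ez [Ex D']; rewrite (cons_decomp x) (cons_decomp y) Ez Ex; exact: Hc.
split => //.
split; first split.
- by rewrite !vsh_0.
- split; first by move=> v w v' w' D1' D2'; rewrite !vsh_add; apply: Ha.
  by move=> a v v' D'; rewrite !vsh_scale; apply: Hs.
move=> x y; split.
  move=> Dxy a b Dab; rewrite /rel_form -omega_vsh -(omega_vsh y).
  by rewrite (lag_orth HL Dxy Dab) subrr.
move=> H; apply: lag_in => // a b Dab.
have [Ez [Ex D']] := (proj1 (Hsplit a b) Dab).
have := H (vtl a) (vtl b) D' => /eqP; rewrite subr_eq0 => /eqP E.
rewrite (cons_decomp a) (cons_decomp b) omega_addr omega_vsh_ccomb addr0.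
by rewrite omega_addr omega_vsh_ccomb addr0 !omega_vsh.
Qed.

Definition Scons n (S : vec n -> vec n) (x : vec n.+1) : vec n.+1 :=
  vmk n.+1 (fun i => if i is i'.+1 then zc (S (vtl x)) i' else zc x 0)
           (fun i => if i is i'.+1 then xc (S (vtl x)) i' else xc x 0).

Lemma vtl_Scons n S (x : vec n.+1) : vtl (Scons S x) = S (vtl x).
Proof. by apply: vec_ext => i Hi; rewrite ?zc_vtl ?xc_vtl /Scons ?zc_vmk ?xc_vmk /= ltnS Hi. Qed.
Lemma zc_Scons n S (x : vec n.+1) : zc (Scons S x) 0 = zc x 0.
Proof. by rewrite zc_vmk. Qed.
Lemma xc_Scons n S (x : vec n.+1) : xc (Scons S x) 0 = xc x 0.
Proof. by rewrite xc_vmk. Qed.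

Lemma Scons_linsymp n (S : vec n -> vec n) : linear_symplecto S -> linear_symplecto (Scons S).
Proof.
move=> HS; have [Si [HSi [c1 c2]]] := linsymp_invE HS.
case: HS => _ [[Ha Hs] Ho].
split.
  exists (Scons Si) => x; apply: vec_ext_cons;
    rewrite ?vtl_Scons ?zc_Scons ?xc_Scons ?c1 ?c2 //.
split; first split.
- move=> v w; apply: vec_ext_cons.
  + by rewrite vtl_add !vtl_Scons vtl_add Ha.
  + by rewrite zc_vadd !zc_Scons zc_vadd.
  + by rewrite xc_vadd !xc_Scons xc_vadd.
- move=> a v; apply: vec_ext_cons.
  + by rewrite vtl_scale !vtl_Scons vtl_scale Hs.
  + by rewrite zc_vscale !zc_Scons zc_vscale.
  + by rewrite xc_vscale !xc_Scons xc_vscale.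
move=> v w; rewrite omega_cons !vtl_Scons Ho !zc_Scons !xc_Scons -omega_cons //.
Qed.

Lemma vtl_vcat k l l' n (u : vec k.+1) (q : vec l) (q' : vec l') :
  (forall j, zc q j = zc q' j) -> (forall j, xc q j = xc q' j) ->
  vtl (@vcat K k.+1 l n.+1 u q) = @vcat K k l' n (vtl u) q'.
Proof.
move=> Hz Hx; apply: vec_ext => i Hi.
  by rewrite zc_vtl !zc_vcat // ltnS; case: ifP => _; rewrite ?zc_vtl ?subSS ?Hz.
by rewrite xc_vtl !xc_vcat // ltnS; case: ifP => _; rewrite ?xc_vtl ?subSS ?Hx.
Qed.

Lemma zc_recast l l' (q : vec l') : l = l' -> forall j, zc (vmk l (zc q) (xc q)) j = zc q j.
Proof. by move=> E j; rewrite zc_vmk; case: ifP => // /negbT; rewrite -leqNgt E => H; rewrite zc_out. Qed.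
Lemma xc_recast l l' (q : vec l') : l = l' -> forall j, xc (vmk l (zc q) (xc q)) j = xc q j.
Proof. by move=> E j; rewrite xc_vmk; case: ifP => // /negbT; rewrite -leqNgt E => H; rewrite xc_out. Qed.

Lemma nf_cons n m k (S : vec n -> vec n) (T : vec m -> vec m) (x : vec n.+1) (y : vec m.+1) :
  (zc x 0 = zc y 0 /\ xc x 0 = xc y 0 /\ normal_form k S T (vtl x) (vtl y)) <->
  normal_form k.+1 (Scons S) (Scons T) x y.
Proof.
split.
  case=> Ez [Ex [u [p [q [Hp [Hq [E1 E2]]]]]]].
  have Hn : (n.+1 - k.+1 = n - k)%N by rewrite subSS.
  have Hm : (m.+1 - k.+1 = m - k)%N by rewrite subSS.
  pose u' : vec k.+1 := vmk k.+1 (fun i => if i is i'.+1 then zc u i' else zc x 0)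
                                (fun i => if i is i'.+1 then xc u i' else xc x 0).
  have Hu : vtl u' = u.
    by apply: vec_ext => i Hi; rewrite ?zc_vtl ?xc_vtl ?zc_vmk ?xc_vmk /= ltnS Hi.
  exists u', (vmk (m.+1 - k.+1) (zc p) (xc p)), (vmk (n.+1 - k.+1) (zc q) (xc q)).
  split; first by apply/inP_zc => j; rewrite (zc_recast _ Hm); exact: (proj1 (inP_zc _) Hp j).
  split; first by apply/inP_zc => j; rewrite (zc_recast _ Hn); exact: (proj1 (inP_zc _) Hq j).
  split.
    apply: vec_ext_cons.
    - rewrite vtl_Scons E1 (@vtl_vcat _ _ _ _ _ _ _ (zc_recast q Hn) (xc_recast q Hn)) Hu //.
    - by rewrite zc_Scons zc_vcat //= zc_vmk.
    - by rewrite xc_Scons xc_vcat //= xc_vmk.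
  apply: vec_ext_cons.
  - by rewrite vtl_Scons E2 (@vtl_vcat _ _ _ _ _ _ _ (zc_recast p Hm) (xc_recast p Hm)) Hu.
  - by rewrite zc_Scons zc_vcat //= zc_vmk.
  - by rewrite xc_Scons xc_vcat //= xc_vmk.
case=> u [p [q [Hp [Hq [E1 E2]]]]].
have Hn : (n - k = n.+1 - k.+1)%N by rewrite subSS.
have Hm : (m - k = m.+1 - k.+1)%N by rewrite subSS.
split.
  by rewrite -(zc_Scons S) E1 E2 zc_Scons !zc_vcat.
split.
  by rewrite -(xc_Scons S) E1 E2 xc_Scons !xc_vcat.
exists (vtl u), (vmk (m - k) (zc p) (xc p)), (vmk (n - k) (zc q) (xc q)).
split; first by apply/inP_zc => j; rewrite (zc_recast _ Hm); exact: (proj1 (inP_zc _) Hp j).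
split; first by apply/inP_zc => j; rewrite (zc_recast _ Hn); exact: (proj1 (inP_zc _) Hq j).
split.
  rewrite -vtl_Scons E1; apply: vtl_vcat => j; by rewrite ?zc_recast ?xc_recast.
rewrite E2 vtl_Scons; congr T; apply: vtl_vcat => j; by rewrite ?zc_recast ?xc_recast.
Qed.

End Cons.
From mathcomp Require Import all_boot all_order all_algebra.
From mathcomp Require Import ring zify.
From Stdlib Require Import Classical FunctionalExtensionality.
Set Implicit Arguments. Unset Strict Implicit. Unset Printing Implicit Defensive.
Import GRing.Theory.
Local Open Scope ring_scope.

Section Main.
Variable K : fieldType.
Local Notation vec := (vec K).
Local Notation vz := (@vzero K _).

Lemma vec0_eq (v : vec 0) : v = vz.
Proof. by apply: vec_ext. Qed.

Lemma ff_nz n j : (j < n)%N -> ff n j <> vz :> vec n.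
Proof.
move=> Hj; apply: (@nz_of_omega _ _ _ (ee n j)).
by rewrite omega_ee // xc_vmk Hj eqxx oppr_eq0 oner_eq0.
Qed.
Lemma ee_nz n j : (j < n)%N -> ee n j <> vz :> vec n.
Proof.
move=> Hj; apply: (@nz_of_omega _ _ _ (ff n j)).
by rewrite omega_ff // zc_vmk Hj eqxx oner_eq0.
Qed.

Lemma nf_base (D : relation K 0 0) : is_lagrangian_subspace D -> NFex D.
Proof.
case=> [[H0 _] _]; exists 0%N, (fun v => v), (fun v => v).
split => //; split; first exact: linsymp_id K _.
split; first exact: linsymp_id K _.
move=> v w; rewrite (vec0_eq v) (vec0_eq w); split => // _.
exists vz, vz, vz; do !split; try by []; by apply: vec_ext.
Qed.

Lemma step_P n m (D : relation K n.+1 m) :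
  is_lagrangian_subspace D -> (exists v, v <> vz /\ D v vz) ->
  (forall D'' : relation K n m, is_lagrangian_subspace D'' -> NFex D'') -> NFex D.
Proof.
move=> HL [v [Hv Dv]] IH.
have [S0 [HS0 E0]] := symp_trans Hv (ff_nz (ltnSn n)).
have [S0i [HS0i [c1 c2]]] := linsymp_invE HS0.
pose D1 := fun x y => D (S0i x) ((fun u : vec m => u) y).
have HL1 : is_lagrangian_subspace D1.
  exact: (@lag_transport K n.+1 m D S0 S0i (fun u => u) (fun u => u) HS0 (linsymp_id K m) c1 c2 (fun _ => erefl) (fun _ => erefl) HL).
have Hf : D1 (ff n.+1 n) vz by rewrite /D1 -E0 c1.
have [Hsplit HL''] := split_snoc HL1 Hf.
have [k [S'' [T [Hk [HS'' [HT Hnf]]]]]] := IH _ HL''.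
exists k, (fun x => Sext S'' (S0 x)), (fun u => (fun y : vec m => y) (T u)).
split; first by move: Hk; rewrite /minn; case: ifP; case: ifP; lia.
split; first exact: linsymp_comp HS0 (Sext_linsymp HS'').
split; first exact: HT.
apply: (nf_transport (T:=fun u => u) c1 (fun _ => erefl) (fun _ => erefl)) => x y.
have Hkn : (k <= n)%N by move: Hk; rewrite /minn; case: ifP; lia.
rewrite -(nf_snoc _ _ _ _ Hkn).
apply: iff_trans (Hsplit x y) _.
by split=> [[H1 H2]|[H1 H2]]; split => //; [apply/Hnf | apply/Hnf].
Qed.

Lemma step_id n m (D : relation K n.+1 m.+1) v w v' w' :
  is_lagrangian_subspace D -> D v w -> D v' w' -> omega v v' = 1 ->
  (forall D'' : relation K n m, is_lagrangian_subspace D'' -> NFex D'') -> NFex D.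
Proof.
move=> HL Dvw Dvw' Hvv IH.
have Hww : omega w w' = 1 by rewrite -(lag_orth HL Dvw Dvw').
have [S0 [HS0 [E0 F0]]] := symp_pair Hvv.
have [T0 [HT0 [G0 H0]]] := symp_pair Hww.
have [S0i [HS0i [c1 c2]]] := linsymp_invE HS0.
have [T0i [HT0i [d1 d2]]] := linsymp_invE HT0.
pose D1 := fun x y => D (S0i x) (T0i y).
have HL1 : is_lagrangian_subspace D1 by exact: (lag_transport HS0 HT0 c1 c2 d1 d2 HL).
have He : D1 (ee n.+1 0) (ee m.+1 0) by rewrite /D1 -E0 -G0 c1 d1.
have Hf : D1 (ff n.+1 0) (ff m.+1 0) by rewrite /D1 -F0 -H0 c1 d1.
have [Hsplit HL''] := split_cons HL1 He Hf.
have [k [S'' [T'' [Hk [HS'' [HT'' Hnf]]]]]] := IH _ HL''.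
exists k.+1, (fun x => Scons S'' (S0 x)), (fun u => T0i (Scons T'' u)).
split; first by move: Hk; rewrite /minn; case: ifP; case: ifP; lia.
split; first exact: linsymp_comp HS0 (Scons_linsymp HS'').
split; first exact: linsymp_comp (Scons_linsymp HT'') HT0i.
apply: (nf_transport c1 d1 d2) => x y.
rewrite -nf_cons.
apply: iff_trans (Hsplit x y) _.
by split=> [[H1 [H2 H3]]|[H1 [H2 H3]]]; do !split => //; [apply/Hnf | apply/Hnf].
Qed.

Lemma main_lin N : forall n m (D : relation K n m), (n + m <= N)%N ->
  is_lagrangian_subspace D -> NFex D.
Proof.
elim: N => [|N IH] n m D Hnm HL.
  case: n D Hnm HL => [|n] //; case: m => [|m] // D _ HL; exact: nf_base.
case: (classic (exists v, v <> vz /\ D v vz)) => [C1|N1].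
  case: n D Hnm HL C1 => [|n] D Hnm HL C1.
    by case: C1 => v [Hv _]; case: Hv; exact: vec0_eq.
  apply: step_P => // D'' HL''; apply: IH => //; lia.
case: (classic (exists w, w <> vz /\ D vz w)) => [C2|N2].
  apply: nf_transpose.
  case: m D Hnm HL C2 {N1} => [|m] D Hnm HL C2.
    by case: C2 => v [Hv _]; case: Hv; exact: vec0_eq.
  apply: step_P; first exact: lag_transpose.
    by case: C2 => w [Hw Dw]; exists w.
  move=> D'' HL''; apply: IH => //; lia.
case: n D Hnm HL N1 N2 => [|n] D Hnm HL N1 N2.
  case: m D Hnm HL N1 N2 => [|m] D Hnm HL N1 N2; first exact: nf_base.
  have Hn : ~ D vz (ee m.+1 0) by move=> De; apply: N2; exists (ee m.+1 0); split => //; exact: ee_nz.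
  have [a [b [Dab Hab]]] := lag_not_in HL Hn.
  exfalso; apply: N2; exists b; split.
    by move=> Eb; move: Hab; rewrite Eb !omega_0l omega_0r eqxx.
  by rewrite -(vec0_eq a).
have Hn : ~ D (ee n.+1 0) vz by move=> De; apply: N1; exists (ee n.+1 0); split => //; exact: ee_nz.
have [a [b [Dab Hab]]] := lag_not_in HL Hn.
have Ha : a <> vz by move=> Ea; move: Hab; rewrite Ea omega_0r omega_0l eqxx.
have Hn' : ~ D a vz by move=> Da; apply: N1; exists a.
have [a' [b' [Dab' Hab']]] := lag_not_in HL Hn'.
rewrite omega_0l in Hab'.
have [[_ [_ Hs]] _] := HL.
have Dc := Hs (omega a a')^-1 _ _ Dab'.
have H1 : omega a (vscale (omega a a')^-1 a') = 1 by rewrite omega_scaler mulVf.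
case: m D Hnm HL N1 N2 Hn a b Dab Hab Ha Hn' a' b' Dab' Hab' Hs Dc H1 => [|m] D Hnm HL N1 N2 Hn a b Dab Hab Ha Hn' a' b' Dab' Hab' Hs Dc H1.
  have := lag_orth HL Dab Dc; rewrite H1 omega_n0 => /eqP; by rewrite oner_eq0.
apply: (step_id HL Dab Dc H1) => D'' HL''; apply: IH => //; lia.
Qed.

End Main.
From mathcomp Require Import all_boot all_order all_algebra.
From mathcomp Require Import ring zify.
From Stdlib Require Import Classical FunctionalExtensionality.
Set Implicit Arguments. Unset Strict Implicit. Unset Printing Implicit Defensive.
Import GRing.Theory.
Local Open Scope ring_scope.

Lemma vsubK (K : fieldType) n (u a : vec K n) : vadd (vadd u a) (vopp a) = u.
Proof. by apply: vec_ext => i _; rewrite !zcE; ring. Qed.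
Lemma vaddK (K : fieldType) n (u a : vec K n) : vadd (vadd u (vopp a)) a = u.
Proof. by apply: vec_ext => i _; rewrite !zcE; ring. Qed.

Theorem mainTheorem1 (K : fieldType) (n m : nat) (L : relation K n m) :
  affine_lagrangian_relation L -> (exists v w, L v w) ->
  (exists (k : nat) (S : vec K n -> vec K n) (T : vec K m -> vec K m),
      (k <= minn n m)%N /\ affine_symplecto S /\ affine_symplecto T /\
      forall v w, L v w <-> normal_form k S T v w) /\
  (linear_lagrangian_relation L ->
   exists (k : nat) (S : vec K n -> vec K n) (T : vec K m -> vec K m),
      (k <= minn n m)%N /\ linear_symplecto S /\ linear_symplecto T /\
      forall v w, L v w <-> normal_form k S T v w).
Proof.
move=> HA [v0 [w0 L0]]; split; last first.
  by move=> HL; exact: (main_lin (leqnn (n + m)) HL).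
case: HA => [He|[a [a' [D [HD HLD]]]]]; first by case: (He v0 w0).
have [k [S [T [Hk [HS [HT Hnf]]]]]] := main_lin (leqnn (n + m)) HD.
have [Si [_ [c1 c2]]] := linsymp_invE HS.
have [Ti [_ [d1 d2]]] := linsymp_invE HT.
case: (HS) => _ [[Sa Ss] So]; case: (HT) => _ [[Ta Ts] To].
exists k, (fun v => S (vadd v (vopp a))), (fun y => vadd (T y) a').
split => //; split.
  split.
    exists (fun y => vadd (Si y) a) => x; first by rewrite c1 vaddK.
    by rewrite vsubK c2.
  exists S, (S (vopp a)); split; first by split.
  by split => // x; rewrite Sa.
split.
  split.
    exists (fun y => Ti (vadd y (vopp a'))) => x; first by rewrite vsubK d1.
    by rewrite d2 vaddK.
  by exists T, a'; split; first by split.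
move=> v w; rewrite HLD Hnf.
split; case=> u [p [q [Hp [Hq [E1 E2]]]]]; exists u, p, q; do !split => //.
  by rewrite -E2 vaddK.
by rewrite E2 vsubK.
Qed.
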